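(* Let $d\ge 2$, let $\mathbf f_t(z)=\frac{z^d+t}{z}\in\overline{\mathbb Q}(t)(z)$, and let $\mathbf c=\mathbf A/\mathbf B\in\overline{\mathbb Q}(t)$ with $\mathbf A,\mathbf B\in\overline{\mathbb Q}[t]$ coprime. If $\mathbf c(0)\ne 0$, then $$\widehat h_{\mathbf f}(\mathbf c)=\frac{\deg(\mathbf f_t(\mathbf c(t)))}{d}=\frac{\deg(\mathbf f_t^2(\mathbf c(t)))}{d^2}.$$
   Context: For a rational function $g\in\overline{\mathbb Q}(t)$, $\deg(g)$ is the maximum of the degrees of numerator and denominator in lowest terms. $\widehat h_{\mathbf f}(\mathbf c)=\lim_{n\to\infty}\deg(\mathbf f_t^n(\mathbf c(t)))/d^n$, where $\mathbf f_t^n$ denotes the $n$-th iterate of $z\mapsto \mathbf f_t(z)$. The condition $\mathbf c(0)\neq 0$ means $\mathbf A(0)\ne 0$. *)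

(* Defs.v *)
From HB Require Import structures.
From mathcomp Require Import all_boot all_order all_algebra all_field.
From mathcomp Require Import generic_quotient fraction.
From Stdlib Require Import Reals.
Set Implicit Arguments. Unset Strict Implicit. Unset Printing Implicit Defensive.
Import GRing.Theory.
Local Open Scope ring_scope.

(* Rational functions in t over Qbar (= algC). *)
Notation ratfun := {fraction {poly algC}}.

Definition ratdeg (g : ratfun) : nat :=
  let r := repr g in
  let p := \n_r in let q := \d_r in
  let g0 := gcdp p q in
  maxn (size (p %/ g0)).-1 (size (q %/ g0)).-1.

Definition polyF (p : {poly algC}) : ratfun := @FracField.tofrac _ p.

Definition tvar : ratfun := polyF 'X.

Definition fmap (d : nat) (z : ratfun) : ratfun := (z ^+ d + tvar) / z.

Definition hseq (d : nat) (c : ratfun) (n : nat) : R :=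
  (INR (ratdeg (iter n (fmap d) c)) / INR (d ^ n))%R.

(* Main.v *)
Require Import Defs.
From HB Require Import structures.
From mathcomp Require Import all_boot all_order all_algebra all_field.
From mathcomp Require Import generic_quotient fraction.
From mathcomp Require Import zify.
Set Implicit Arguments. Unset Strict Implicit. Unset Printing Implicit Defensive.
Import GRing.Theory.
Local Open Scope ring_scope.
Local Open Scope quotient_scope.

Lemma frac_repr (x : ratfun) :
  x * polyF (\d_(repr x)) = polyF (\n_(repr x)).
Proof.
rewrite /polyF -{1}[x]reprK.
set r := repr x.
rewrite !piE.
apply/eqmodP; rewrite /= FracField.equivfE.
rewrite /FracField.mulf !numden_Ratio ?mulf_neq0 ?oner_eq0 //.
rewrite !mulr1 mulrC //. all: by case: (r) => [[? ?] /=].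
Qed.

Lemma polyF_eq0 p : (polyF p == 0) = (p == 0).
Proof. exact: tofrac_eq0. Qed.

Lemma ratdeg_frac A B : B != 0 -> coprimep A B ->
  ratdeg (polyF A / polyF B) = maxn (size A).-1 (size B).-1.
Proof.
move=> B0 cAB; rewrite /ratdeg /=.
set x := polyF A / polyF B.
set n := \n_(repr x); set dd := \d_(repr x).
have dd0 : dd != 0 by rewrite /dd; case: (repr x) => [[? ?] /=].
have E : n * B = A * dd.
  apply/eqP; rewrite -tofrac_eq !tofracM; apply/eqP.
  have := frac_repr x; rewrite -/n -/dd /polyF => <-.
  rewrite /x /polyF; have : FracField.tofrac B != 0 by rewrite tofrac_eq0.
  move=> hB; by rewrite mulrAC divfK.
set g := gcdp n dd.
have g0 : g != 0 by rewrite gcdp_eq0 negb_and dd0 orbT.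
have cnd : coprimep (n %/ g) (dd %/ g) by apply: coprimep_div_gcd; rewrite dd0 orbT.
have hn : n = n %/ g * g by rewrite divpK // dvdp_gcdl.
have hd : dd = dd %/ g * g by rewrite divpK // dvdp_gcdr.
have E' : n %/ g * B = A * (dd %/ g).
  apply: (mulIf g0); rewrite -mulrA [B * g]mulrC mulrA -hn -mulrA -hd; exact: E.
have h1 : n %/ g %= A.
  apply/andP; split.
    by rewrite -(Gauss_dvdpl _ cnd) -E' dvdp_mulIl.
  by rewrite -(Gauss_dvdpl _ cAB) E' dvdp_mulIl.
have h2 : dd %/ g %= B.
  apply/andP; split.
    rewrite coprimep_sym in cnd.
    by rewrite -(Gauss_dvdpr _ cnd) E' dvdp_mulIr.
  rewrite coprimep_sym in cAB.
  by rewrite -(Gauss_dvdpr _ cAB) -E' dvdp_mulIr.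
by rewrite (eqp_size h1) (eqp_size h2).
Qed.
Lemma alg_id (F : fieldType) (a b x : F) e : a != 0 -> b != 0 ->
  ((a / b) ^+ e.+1 + x) / (a / b) = (a ^+ e.+1 + x * b ^+ e.+1) / (a * b ^+ e).
Proof.
move=> a0 b0.
have be0 : b ^+ e != 0 by rewrite expf_neq0.
rewrite expr_div_n -[x in _ + x](mulfK (expf_neq0 e.+1 b0)) -mulrDl.
rewrite -!mulrA; congr (_ * _).
by rewrite invf_div exprS !invfM mulrAC mulKf.
Qed.

Definition stp (d : nat) (p : {poly algC} * {poly algC}) :=
  (p.1 ^+ d + 'X * p.2 ^+ d, p.1 * p.2 ^+ d.-1).
Definition Inv (p : {poly algC} * {poly algC}) :=
  [&& p.2 != 0, coprimep p.1 p.2 & p.1.[0] != 0].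

Lemma Inv_neq0 p : Inv p -> p.1 != 0 /\ p.2 != 0.
Proof.
case/and3P=> B0 _ A0; split=> //.
by apply: contraNneq A0 => ->; rewrite horner0.
Qed.

Lemma fmap_stp d p : (1 <= d)%N -> Inv p ->
  fmap d (polyF p.1 / polyF p.2) = polyF (stp d p).1 / polyF (stp d p).2.
Proof.
case: d => // e _ hp; have [A0 B0] := Inv_neq0 hp.
rewrite /fmap /stp /= /tvar /polyF !(tofracD, tofracM, tofracXn) /=.
by apply: alg_id; rewrite tofrac_eq0.
Qed.

Lemma Inv_stp d p : (1 <= d)%N -> Inv p -> Inv (stp d p).
Proof.
case: d => // e _ hp; have [A0 B0] := Inv_neq0 hp.
case/and3P: hp => _ cAB hA0.
rewrite /Inv /stp /=; apply/and3P; split.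
- by rewrite mulf_neq0 // expf_neq0.
- rewrite coprimepMr; apply/andP; split.
    rewrite coprimep_sym [p.1 ^+ _]exprSr coprimep_addl_mul coprimepMr.
    by rewrite coprimepX rootE hA0 coprimep_expr.
  apply: coprimep_expr; rewrite coprimep_sym addrC [p.2 ^+ _]exprSr mulrA coprimep_addl_mul.
  by apply: coprimep_expr; rewrite coprimep_sym.
- by rewrite !hornerE expf_neq0.
Qed.

Lemma size_pexp (p : {poly algC}) n : p != 0 -> size (p ^+ n) = ((size p).-1 * n).+1.
Proof.
move=> p0; rewrite -size_exp prednK // size_poly_gt0 expf_neq0 //.
Qed.

Lemma size_stp d p : (2 <= d)%N -> Inv p ->
  (size (stp d p).1).-1 = maxn ((size p.1).-1 * d) ((size p.2).-1 * d).+1 /\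
  (size (stp d p).2).-1 = ((size p.1).-1 + (size p.2).-1 * d.-1)%N.
Proof.
move=> d2 hp; have [A0 B0] := Inv_neq0 hp.
rewrite /stp /=.
set a := (size p.1).-1; set b := (size p.2).-1.
have sA : size (p.1 ^+ d) = (a * d).+1 by rewrite size_pexp.
have sB : size ('X * p.2 ^+ d) = (b * d).+2.
  by rewrite mulrC size_mulX ?expf_neq0 // size_pexp.
split; last first.
  rewrite size_mul ?expf_neq0 // size_pexp // -(prednK (_ : 0 < size p.1)%N) ?size_poly_gt0 //.
  by rewrite addSn addnS.
have ne : (a * d != (b * d).+1)%N.
  apply/negP=> /eqP h.
  have [ab|ba] := leqP a b.
    have : (a * d <= b * d)%N by rewrite leq_mul2r ab orbT.
    rewrite h; lia.
  have : ((b.+1) * d <= a * d)%N by rewrite leq_mul2r ba orbT.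
  rewrite mulSn h.
  move: (b * d)%N d2 => x; lia.
have [lt|ge] := ltnP (a * d) (b * d).+1.
  rewrite addrC size_polyDl ?sA ?sB //.
rewrite size_polyDl ?sA ?sB //.
move: ne ge; move: (a * d)%N (b * d)%N => x y; lia.
Qed.
Lemma deg_base (a b d : nat) : (2 <= d)%N -> (a + b * d.-1 < maxn (a * d) (b * d).+1)%N.
Proof. move=> d2; case: d d2 => [|[|e]] // _ /=; nia. Qed.

Lemma deg_step (a b d : nat) : (2 <= d)%N -> (b < a)%N ->
  maxn (a * d) (b * d).+1 = (a * d)%N /\ (a + b * d.-1 < a * d)%N.
Proof. move=> d2 ba; case: d d2 => [|[|e]] // _ /=; split; [apply/maxn_idPl|]; nia. Qed.
Section Main.
Variables (d : nat) (A B : {poly algC}).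
Hypotheses (d2 : (2 <= d)%N) (hI : Inv (A, B)).

Let q n := iter n (stp d) (A, B).

Lemma iter_eq n : iter n (fmap d) (polyF A / polyF B) = polyF (q n).1 / polyF (q n).2
   /\ Inv (q n).
Proof.
elim: n => [|n [IH1 IH2]] //=.
rewrite IH1 fmap_stp ?(ltnW d2) //; split=> //.
exact: Inv_stp (ltnW d2) IH2.
Qed.

Let a1 := (size (q 1).1).-1.

Lemma deg_iter n : (size (q n.+1).1).-1 = (a1 * d ^ n)%N /\
   ((size (q n.+1).2).-1 < (size (q n.+1).1).-1)%N.
Proof.
elim: n => [|n [IH1 IH2]].
  rewrite muln1; split=> //.
  have [-> ->] := size_stp d2 hI.
  exact: deg_base.
have hq := (iter_eq n.+1).2.
have [h1 h2] := size_stp d2 hq.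
have [e1 e2] := deg_step d2 IH2.
have -> : q n.+2 = stp d (q n.+1) by [].
rewrite h1 h2 e1 IH1 expnS; split; first by rewrite mulnCA mulnC.
by rewrite -IH1.
Qed.

Lemma ratdeg_iter n : ratdeg (iter n.+1 (fmap d) (polyF A / polyF B)) = (a1 * d ^ n)%N.
Proof.
have [-> hq] := iter_eq n.+1.
case/and3P: hq => h0 hc _.
rewrite ratdeg_frac //.
have [<- h] := deg_iter n.
by apply/maxn_idPl/ltnW.
Qed.

End Main.

Lemma powE m n : Nat.pow m n = expn m n.
Proof. by elim: n => [|n IH] //=; rewrite IH expnS. Qed.

From Stdlib Require Import Reals Lra Lia.
Unset Implicit Arguments.
Local Close Scope quotient_scope.

Theorem proposition3p1 (d : nat) (A B : {poly algC}) :
  (2 <= d)%nat -> B != 0 -> coprimep A B -> A.[0] != 0 ->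
  let c : ratfun := polyF A / polyF B in
  Un_cv (hseq d c) (INR (ratdeg (fmap d c)) / INR d)%R /\
  (INR (ratdeg (fmap d c)) / INR d =
     INR (ratdeg (iter 2 (fmap d) c)) / INR (d ^ 2))%R.
Proof.
move=> d2 B0 cAB A0 c.
have hI : Inv (A, B) by rewrite /Inv /= B0 cAB A0.
set k := (size (iter 1 (stp d) (A, B)).1).-1.
have r1 : ratdeg (fmap d c) = k by rewrite -[fmap d c]/(iter 1 (fmap d) c) ratdeg_iter // muln1.
have dn0 : INR d <> 0%R by apply: not_0_INR; lia.
have e n : hseq d c n.+1 = (INR k / INR d)%R.
  rewrite /hseq ratdeg_iter // powE expnS -!multE !mult_INR.
  have : INR (expn d n) <> 0%R by apply: not_0_INR; apply/eqP; rewrite expn_eq0 negb_and; apply/orP; left; apply/eqP; lia.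
  by move=> h; rewrite -/k Rdiv_mult_r_r.
rewrite r1; split.
  move=> eps Heps; exists 1%nat => n Hn.
  case: n Hn => [|n] Hn; first lia.
  rewrite e /R_dist Rminus_diag Rabs_R0; lra.
rewrite -[iter 2 _ _]/(iter 1.+1 (fmap d) c) ratdeg_iter // expn1.
by rewrite powE -!multE !mult_INR /= Rdiv_mult_r_r.
Qed.
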